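(* Let $A = \begin{pmatrix} 2 & 1 \\ 1 & 1\end{pmatrix}$, $\lambda = \frac{3+\sqrt5}{2}$, and let $M_A$ be the suspension of $A$ with the Riemannian metric $ds^2 = dz^2 + e^{2z\log\lambda}du^2 + e^{-2z\log\lambda}dv^2$ (see context). Then the restrictions of the geodesic flow on $SM_A$ to the invariant submanifolds $V^+ = \{p_u=p_v=0,\ p_z=1\}$ and $V^- = \{p_u=p_v=0,\ p_z=-1\}$ are Anosov flows.
   Context: $T^2 = \mathbb{R}^2/\mathbb{Z}^2$ with $A$ acting linearly; $M_A$ is the quotient of $T^2 \times \mathbb{R}$ by the $\mathbb{Z}$-action generated by $(X,z)\mapsto (AX,z+1)$. $(u,v)$ are linear coordinates on $\mathbb{R}^2$ in which $A(u,v) = (\lambda^{-1}u,\lambda v)$; the metric above is invariant under the $\mathbb{Z}$-action and descends to $M_A$. $(p_u,p_v,p_z)$ are the momenta conjugate to $(u,v,z)$, and the geodesic flow is the Hamiltonian flow of $H = \frac12(p_z^2 + e^{-2z\log\lambda}p_u^2 + e^{2z\log\lambda}p_v^2)$ on $SM_A = \{H = 1/2\}$. *)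

(* Defs.v *)
From Stdlib Require Import Reals.
From Coquelicot Require Import Coquelicot.
Open Scope R_scope.

(* lambda = (3+sqrt 5)/2, the expanding eigenvalue of A = [[2,1],[1,1]] *)
Definition lam : R := (3 + sqrt 5) / 2.
Definition llam : R := ln lam.

(* Points of the cotangent bundle of the cover T^2 x R -> M_A, in the
   coordinates (u, v, z, p_u, p_v, p_z). *)
Record phase := mkP { cu : R; cv : R; cz : R; pu : R; pv : R; pz : R }.

Definition Ham (y : phase) : R :=
  / 2 * (pz y ^ 2 + exp (- 2 * cz y * llam) * pu y ^ 2
         + exp (2 * cz y * llam) * pv y ^ 2).

Definition dH_du (y : phase) := Derive (fun s => Ham (mkP s (cv y) (cz y) (pu y) (pv y) (pz y))) (cu y).
Definition dH_dv (y : phase) := Derive (fun s => Ham (mkP (cu y) s (cz y) (pu y) (pv y) (pz y))) (cv y).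
Definition dH_dz (y : phase) := Derive (fun s => Ham (mkP (cu y) (cv y) s (pu y) (pv y) (pz y))) (cz y).
Definition dH_dpu (y : phase) := Derive (fun s => Ham (mkP (cu y) (cv y) (cz y) s (pv y) (pz y))) (pu y).
Definition dH_dpv (y : phase) := Derive (fun s => Ham (mkP (cu y) (cv y) (cz y) (pu y) s (pz y))) (pv y).
Definition dH_dpz (y : phase) := Derive (fun s => Ham (mkP (cu y) (cv y) (cz y) (pu y) (pv y) s)) (pz y).

(* Phi is the geodesic flow on SM_A = {H = 1/2} (lifted to the cover):
   the Hamiltonian flow of H. *)
Definition is_geodesic_flow (Phi : R -> phase -> phase) : Prop :=
  forall y, Ham y = 1 / 2 ->
    Phi 0 y = y /\
    forall t,
      is_derive (fun s => cu (Phi s y)) t (dH_dpu (Phi t y)) /\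
      is_derive (fun s => cv (Phi s y)) t (dH_dpv (Phi t y)) /\
      is_derive (fun s => cz (Phi s y)) t (dH_dpz (Phi t y)) /\
      is_derive (fun s => pu (Phi s y)) t (- dH_du (Phi t y)) /\
      is_derive (fun s => pv (Phi s y)) t (- dH_dv (Phi t y)) /\
      is_derive (fun s => pz (Phi s y)) t (- dH_dz (Phi t y)).

(* Points / tangent vectors of the 3-manifold V^{+-} (coordinates (u,v,z)). *)
Record vec3 := mkV { v1 : R; v2 : R; v3 : R }.
Definition vadd (a b : vec3) : vec3 := mkV (v1 a + v1 b) (v2 a + v2 b) (v3 a + v3 b).
Definition vscale (c : R) (a : vec3) : vec3 := mkV (c * v1 a) (c * v2 a) (c * v3 a).
Definition vzero : vec3 := mkV 0 0 0.

Definition embedV (sigma : R) (x : vec3) : phase := mkP (v1 x) (v2 x) (v3 x) 0 0 sigma.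
Definition in_V (sigma : R) (y : phase) : Prop := pu y = 0 /\ pv y = 0 /\ pz y = sigma.

Definition restrict_flow (Phi : R -> phase -> phase) (sigma : R) (t : R) (x : vec3) : vec3 :=
  let y := Phi t (embedV sigma x) in mkV (cu y) (cv y) (cz y).

(* Riemannian metric on V^sigma: pulled back from M_A (ds^2 = dz^2 +
   e^{2 z log lam} du^2 + e^{-2 z log lam} dv^2) by the projection
   V^sigma -> M_A; it is invariant under the deck group. *)
Definition gnorm (x w : vec3) : R :=
  sqrt (exp (2 * v3 x * llam) * v1 w ^ 2 + exp (- 2 * v3 x * llam) * v2 w ^ 2 + v3 w ^ 2).

Definition is_subspace (E : vec3 -> Prop) : Prop :=
  E vzero /\ (forall a b, E a -> E b -> E (vadd a b)) /\ (forall c a, E a -> E (vscale c a)).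

Definition is_flow3 (psi : R -> vec3 -> vec3) : Prop :=
  (forall x, psi 0 x = x) /\ (forall s t x, psi (s + t) x = psi s (psi t x)).

Definition flow_diff (psi : R -> vec3 -> vec3) (t : R) (x w d : vec3) : Prop :=
  is_derive (fun s => v1 (psi t (vadd x (vscale s w)))) 0 (v1 d) /\
  is_derive (fun s => v2 (psi t (vadd x (vscale s w)))) 0 (v2 d) /\
  is_derive (fun s => v3 (psi t (vadd x (vscale s w)))) 0 (v3 d).

Definition flow_vel (psi : R -> vec3 -> vec3) (x X : vec3) : Prop :=
  is_derive (fun t => v1 (psi t x)) 0 (v1 X) /\
  is_derive (fun t => v2 (psi t x)) 0 (v2 X) /\
  is_derive (fun t => v3 (psi t x)) 0 (v3 X).

Definition Anosov_flow (psi : R -> vec3 -> vec3) : Prop :=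
  is_flow3 psi /\
  (forall t x w, exists d, flow_diff psi t x w d) /\
  (forall x, exists X, flow_vel psi x X /\ X <> vzero) /\
  exists (Es Eu : vec3 -> vec3 -> Prop) (C mu : R),
    0 < C /\ 0 < mu /\
    (forall x, is_subspace (Es x) /\ is_subspace (Eu x)) /\
    (forall x X, flow_vel psi x X ->
       (forall w, exists a b c, Es x a /\ Eu x b /\ w = vadd a (vadd b (vscale c X))) /\
       (forall a b c, Es x a -> Eu x b -> vadd a (vadd b (vscale c X)) = vzero ->
          a = vzero /\ b = vzero /\ c = 0)) /\
    (forall t x w d, flow_diff psi t x w d ->
       (Es x w -> Es (psi t x) d /\
          (0 <= t -> gnorm (psi t x) d <= C * exp (- mu * t) * gnorm x w)) /\
       (Eu x w -> Eu (psi t x) d /\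
          (t <= 0 -> gnorm (psi t x) d <= C * exp (mu * t) * gnorm x w))).

(* Main.v *)
Require Import Defs.
From Stdlib Require Import Reals Lra FunctionalExtensionality.
From Coquelicot Require Import Coquelicot.
Open Scope R_scope.

Lemma const_deriv (f : R -> R) : (forall t, is_derive f t 0) -> forall t, f t = f 0.
Proof.
  intros H t. destruct (Rtotal_order t 0) as [h|[h|h]].
  - apply (eq_is_derive f t 0); [intros; apply H | exact h].
  - now subst.
  - symmetry; apply (eq_is_derive f 0 t); [intros; apply H | exact h].
Qed.

Lemma dH_du_0 y : dH_du y = 0.
Proof. unfold dH_du, Ham; cbn. apply Derive_const. Qed.
Lemma dH_dv_0 y : dH_dv y = 0.
Proof. unfold dH_dv, Ham; cbn. apply Derive_const. Qed.
Lemma dH_dz_0 y : pu y = 0 -> pv y = 0 -> dH_dz y = 0.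
Proof. intros h1 h2. unfold dH_dz, Ham; cbn. rewrite h1, h2.
  apply is_derive_unique. auto_derive; [trivial| simpl; field]. Qed.
Lemma dH_dpu_0 y : pu y = 0 -> dH_dpu y = 0.
Proof. intros h1. unfold dH_dpu, Ham; cbn. rewrite h1.
  apply is_derive_unique. auto_derive; [trivial| simpl; field]. Qed.
Lemma dH_dpv_0 y : pv y = 0 -> dH_dpv y = 0.
Proof. intros h1. unfold dH_dpv, Ham; cbn. rewrite h1.
  apply is_derive_unique. auto_derive; [trivial| simpl; field]. Qed.
Lemma dH_dpz_e y : dH_dpz y = pz y.
Proof. unfold dH_dpz, Ham; cbn.
  apply is_derive_unique. auto_derive; [trivial| simpl; field]. Qed.

Lemma traj Phi (HP : is_geodesic_flow Phi) s (hs : s * s = 1) x t :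
  Phi t (embedV s x) = mkP (v1 x) (v2 x) (v3 x + s * t) 0 0 s.
Proof.
  set (y := embedV s x).
  assert (Hy : Ham y = 1/2).
  { unfold Ham, y, embedV; cbn. replace (s*(s*1)) with (s*s) by ring. rewrite hs. field. }
  destruct (HP y Hy) as [H0 HD].
  assert (Pu : forall t, pu (Phi t y) = 0).
  { intro t0. rewrite (const_deriv (fun s => pu (Phi s y))), H0; [reflexivity|].
    intro t1. destruct (HD t1) as (_&_&_&h&_). rewrite dH_du_0, Ropp_0 in h. exact h. }
  assert (Pv : forall t, pv (Phi t y) = 0).
  { intro t0. rewrite (const_deriv (fun s => pv (Phi s y))), H0; [reflexivity|].
    intro t1. destruct (HD t1) as (_&_&_&_&h&_). rewrite dH_dv_0, Ropp_0 in h. exact h. }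
  assert (Pz : forall t, pz (Phi t y) = s).
  { intro t0. rewrite (const_deriv (fun s => pz (Phi s y))), H0; [reflexivity|].
    intro t1. destruct (HD t1) as (_&_&_&_&_&h). rewrite dH_dz_0, Ropp_0 in h; auto. }
  assert (Cu : forall t, cu (Phi t y) = v1 x).
  { intro t0. rewrite (const_deriv (fun s => cu (Phi s y))), H0; [reflexivity|].
    intro t1. destruct (HD t1) as (h&_). rewrite dH_dpu_0 in h; auto. }
  assert (Cv : forall t, cv (Phi t y) = v2 x).
  { intro t0. rewrite (const_deriv (fun s => cv (Phi s y))), H0; [reflexivity|].
    intro t1. destruct (HD t1) as (_&h&_). rewrite dH_dpv_0 in h; auto. }
  assert (Cz : forall t, cz (Phi t y) = v3 x + s * t).
  { intro t0. assert (E := const_deriv (fun r => cz (Phi r y) - s * r)).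
    cbn in E. rewrite H0 in E. cbn in E.
    assert (E' : cz (Phi t0 y) - s * t0 = v3 x - s * 0) by (apply E;
      intro t1; destruct (HD t1) as (_&_&h&_); rewrite dH_dpz_e, Pz in h;
      auto_derive_fun (fun r : R => s * r); intro Hd;
      replace 0 with (s - s * 1) by ring;
      apply (is_derive_minus (fun r => cz (Phi r y)) (fun r => s * r)); [exact h|];
      apply Hd; trivial).
    lra. }
  specialize (Pu t); specialize (Pv t); specialize (Pz t); specialize (Cu t); specialize (Cv t); specialize (Cz t).
  destruct (Phi t y); cbn in *; subst; reflexivity.
Qed.

Definition tr (s : R) (t : R) (x : vec3) : vec3 := mkV (v1 x) (v2 x) (v3 x + s * t).

Lemma llam_pos : 0 < llam.
Proof. unfold llam, lam. rewrite <- ln_1. apply ln_increasing; [lra|].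
  assert (0 <= sqrt 5) by apply sqrt_pos. lra. Qed.

Lemma tr_vel s x X : flow_vel (tr s) x X -> X = mkV 0 0 s.
Proof. intros (h1&h2&h3). unfold tr in *; cbn in *.
  destruct X as [a b c]; cbn in *.
  assert (a = 0) by (apply (is_derive_unique (fun _ => v1 x) 0 a) in h1; rewrite <- h1; apply Derive_const).
  assert (b = 0) by (apply (is_derive_unique (fun _ => v2 x) 0 b) in h2; rewrite <- h2; apply Derive_const).
  assert (c = s).
  { apply is_derive_unique in h3. rewrite <- h3. apply is_derive_unique.
    auto_derive; [trivial|ring]. }
  subst; reflexivity. Qed.

Lemma tr_vel_ex s x : flow_vel (tr s) x (mkV 0 0 s).
Proof. unfold flow_vel, tr; cbn. split; [|split].
  - auto_derive; [trivial|ring].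
  - auto_derive; [trivial|ring].
  - auto_derive; [trivial|ring]. Qed.

Lemma tr_diff s t x w d : flow_diff (tr s) t x w d -> d = w.
Proof. intros (h1&h2&h3). unfold tr, vadd, vscale in *; cbn in *.
  apply is_derive_unique in h1, h2, h3.
  destruct d as [a b c], w as [p q r]; cbn in *.
  rewrite <- h1, <- h2, <- h3.
  f_equal; apply is_derive_unique; auto_derive; auto; ring. Qed.

Lemma tr_diff_ex s t x w : flow_diff (tr s) t x w w.
Proof. unfold flow_diff, tr, vadd, vscale; cbn.
  split; [|split]; auto_derive; auto; ring. Qed.

Lemma tr_flow s : is_flow3 (tr s).
Proof. split.
  - intros [a b c]; unfold tr; cbn; f_equal; ring.
  - intros t1 t2 [a b c]; unfold tr; cbn; f_equal; ring. Qed.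

Lemma exp_sq a : exp (2 * a) = exp a ^ 2.
Proof. replace (2*a) with (a+a) by ring. rewrite exp_plus. ring. Qed.

Lemma normV x w : v1 w = 0 -> v3 w = 0 -> gnorm x w = exp (- (v3 x * llam)) * Rabs (v2 w).
Proof. intros h1 h3. unfold gnorm. rewrite h1, h3.
  replace (-2 * v3 x * llam) with (2 * (- (v3 x * llam))) by ring.
  rewrite exp_sq, <- (pow2_abs (v2 w)).
  replace (exp (2 * v3 x * llam) * 0 ^ 2 + exp (- (v3 x * llam)) ^ 2 * Rabs (v2 w) ^ 2 + 0 ^ 2)
    with ((exp (- (v3 x * llam)) * Rabs (v2 w)) ^ 2) by ring.
  apply sqrt_pow2. apply Rmult_le_pos; [left; apply exp_pos | apply Rabs_pos]. Qed.

Lemma normU x w : v2 w = 0 -> v3 w = 0 -> gnorm x w = exp (v3 x * llam) * Rabs (v1 w).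
Proof. intros h1 h3. unfold gnorm. rewrite h1, h3.
  replace (2 * v3 x * llam) with (2 * (v3 x * llam)) by ring.
  rewrite exp_sq, <- (pow2_abs (v1 w)).
  replace (exp (v3 x * llam) ^ 2 * Rabs (v1 w) ^ 2 + exp (-2 * v3 x * llam) * 0 ^ 2 + 0 ^ 2)
    with ((exp (v3 x * llam) * Rabs (v1 w)) ^ 2) by ring.
  apply sqrt_pow2. apply Rmult_le_pos; [left; apply exp_pos | apply Rabs_pos]. Qed.

Definition EV (x w : vec3) : Prop := v1 w = 0 /\ v3 w = 0.
Definition EU (x w : vec3) : Prop := v2 w = 0 /\ v3 w = 0.

Lemma EV_sub x : is_subspace (EV x).
Proof. unfold is_subspace, EV, vadd, vscale, vzero; cbn.
  split; [lra|split]; intros; [lra|]. destruct H; rewrite H, H0; lra. Qed.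
Lemma EU_sub x : is_subspace (EU x).
Proof. unfold is_subspace, EU, vadd, vscale, vzero; cbn.
  split; [lra|split]; intros; [lra|]. destruct H; rewrite H, H0; lra. Qed.

Lemma decomp s (hs : s <> 0) (Es Eu : vec3 -> vec3 -> Prop)
  (h : (Es = EV /\ Eu = EU) \/ (Es = EU /\ Eu = EV)) x :
  (forall w, exists a b c, Es x a /\ Eu x b /\ w = vadd a (vadd b (vscale c (mkV 0 0 s)))) /\
  (forall a b c, Es x a -> Eu x b -> vadd a (vadd b (vscale c (mkV 0 0 s))) = vzero ->
          a = vzero /\ b = vzero /\ c = 0).
Proof.
  destruct h as [[-> ->]|[-> ->]]; split.
  - intros [p q r]. exists (mkV 0 q 0), (mkV p 0 0), (r / s).
    unfold EV, EU, vadd, vscale; cbn. split; [lra|split;[lra|]]. f_equal; field; auto.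
  - intros [a1 a2 a3] [b1 b2 b3] c; unfold EV, EU, vadd, vscale, vzero; cbn.
    intros [-> ->] [-> ->] E. injection E; intros e3 e2 e1.
    assert (c = 0) by (apply (Rmult_eq_reg_r s); [lra|auto]).
    subst. split; [f_equal; lra|split; [f_equal; lra|auto]].
  - intros [p q r]. exists (mkV p 0 0), (mkV 0 q 0), (r / s).
    unfold EV, EU, vadd, vscale; cbn. split; [lra|split;[lra|]]. f_equal; field; auto.
  - intros [a1 a2 a3] [b1 b2 b3] c; unfold EV, EU, vadd, vscale, vzero; cbn.
    intros [-> ->] [-> ->] E. injection E; intros e3 e2 e1.
    assert (c = 0) by (apply (Rmult_eq_reg_r s); [lra|auto]).
    subst. split; [f_equal; lra|split; [f_equal; lra|auto]].
Qed.

Lemma anosov_plus : Anosov_flow (tr 1).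
Proof.
  split; [apply tr_flow|]. split; [intros; eexists; apply tr_diff_ex|].
  split. { intro x; exists (mkV 0 0 1); split; [apply tr_vel_ex|].
    intro E; injection E; lra. }
  exists EV, EU, 1, llam. split; [lra|]. split; [apply llam_pos|].
  split; [intro; split; [apply EV_sub|apply EU_sub]|].
  split. { intros x X HX. apply tr_vel in HX. subst. apply decomp; auto; lra. }
  intros t x w d Hd. apply tr_diff in Hd. subst d. split.
  - intros Hw. split; [exact Hw|]. intros _. destruct Hw as [h1 h3].
    rewrite !normV by auto. unfold tr; cbn. right.
    replace (- ((v3 x + 1 * t) * llam)) with (- llam * t + - (v3 x * llam)) by ring.
    rewrite exp_plus; ring.
  - intros Hw. split; [exact Hw|]. intros _. destruct Hw as [h1 h3].
    rewrite !normU by auto. unfold tr; cbn. right.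
    replace (((v3 x + 1 * t) * llam)) with (llam * t + (v3 x * llam)) by ring.
    rewrite exp_plus; ring.
Qed.

Lemma anosov_minus : Anosov_flow (tr (-1)).
Proof.
  split; [apply tr_flow|]. split; [intros; eexists; apply tr_diff_ex|].
  split. { intro x; exists (mkV 0 0 (-1)); split; [apply tr_vel_ex|].
    intro E; injection E; lra. }
  exists EU, EV, 1, llam. split; [lra|]. split; [apply llam_pos|].
  split; [intro; split; [apply EU_sub|apply EV_sub]|].
  split. { intros x X HX. apply tr_vel in HX. subst. apply decomp; auto; lra. }
  intros t x w d Hd. apply tr_diff in Hd. subst d. split.
  - intros Hw. split; [exact Hw|]. intros _. destruct Hw as [h1 h3].
    rewrite !normU by auto. unfold tr; cbn. right.
    replace (((v3 x + -1 * t) * llam)) with (- llam * t + (v3 x * llam)) by ring.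
    rewrite exp_plus; ring.
  - intros Hw. split; [exact Hw|]. intros _. destruct Hw as [h1 h3].
    rewrite !normV by auto. unfold tr; cbn. right.
    replace (- ((v3 x + -1 * t) * llam)) with (llam * t + - (v3 x * llam)) by ring.
    rewrite exp_plus; ring.
Qed.

Theorem corollary2 (Phi : R -> phase -> phase) :
  is_geodesic_flow Phi ->
  ((forall t x, in_V 1 (Phi t (embedV 1 x))) /\ Anosov_flow (restrict_flow Phi 1)) /\
  ((forall t x, in_V (-1) (Phi t (embedV (-1) x))) /\ Anosov_flow (restrict_flow Phi (-1))).
Proof.
  intro HP.
  assert (R1 : forall s, s * s = 1 -> restrict_flow Phi s = tr s).
  { intros s hs. apply functional_extensionality; intro t.
    apply functional_extensionality; intro x.
    unfold restrict_flow, tr. rewrite (traj Phi HP s hs). reflexivity. }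
  assert (h1 : 1 * 1 = 1) by ring. assert (h2 : -1 * -1 = 1) by ring.
  split; split.
  - intros t x. rewrite (traj Phi HP 1 h1). unfold in_V; cbn; auto.
  - rewrite (R1 1 h1). apply anosov_plus.
  - intros t x. rewrite (traj Phi HP (-1) h2). unfold in_V; cbn; auto.
  - rewrite (R1 (-1) h2). apply anosov_minus.
Qed.
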